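(* Let $r\geq 1$, let $\mathbf a=(a_1,\ldots,a_r)$ be positive integers, and let $D$ be a positive common multiple of $a_1,\ldots,a_r$. Then for every integer $n\geq 0$, $$f_{\mathbf a}(n) = \frac{1}{(r-1)!} \sum_{j=0}^{\lfloor n/D\rfloor } \binom{r}{j}(-1)^j \sum_{\substack{0\leq j_1\leq \frac{D}{a_1}-1,\ldots, 0\leq j_r\leq \frac{D}{a_r}-1 \\ a_1j_1+\cdots+a_rj_r \equiv n \pmod D}} \prod_{\ell=1}^{r-1} \left(\frac{n-a_1j_{1}- \cdots -a_rj_r}{D}+\ell-j\right),$$ where the inner sum runs over integer tuples $(j_1,\ldots,j_r)$.
   Context: For $n\geq 0$, $f_{\mathbf a}(n)$ denotes the number of integer tuples $(j_1,\ldots,j_r)$ with $a_1j_1+\cdots+a_rj_r=n$ and $0\leq j_k\leq \frac{D}{a_k}-1$ for $1\leq k\leq r$; equivalently, $\sum_{n\geq 0} f_{\mathbf a}(n)z^n=\prod_{i=1}^r\frac{1-z^D}{1-z^{a_i}}$. *)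

(* Defs.v *)
From HB Require Import structures.
From mathcomp Require Import all_boot all_order all_algebra.
Set Implicit Arguments. Unset Strict Implicit. Unset Printing Implicit Defensive.
Import Order.TTheory GRing.Theory Num.Theory.

(* Tuples (j_1,...,j_r) with 0 <= j_k <= D/a_k - 1, encoded as finite functions
   'I_r -> 'I_D together with the bound j_k < D %/ a_k (note D/a_k <= D). *)
Definition in_box (r D : nat) (a : 'I_r -> nat) (j : {ffun 'I_r -> 'I_D}) : bool :=
  [forall k, (j k < D %/ a k)%N].

Definition wsum (r D : nat) (a : 'I_r -> nat) (j : {ffun 'I_r -> 'I_D}) : nat :=
  (\sum_(k < r) a k * j k)%N.

Definition f_a (r D : nat) (a : 'I_r -> nat) (n : nat) : nat :=
  #|[set j : {ffun 'I_r -> 'I_D} | in_box a j && (wsum a j == n)]|.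

(* Main.v *)
Require Import Defs.
From HB Require Import structures.
From mathcomp Require Import all_boot all_order all_algebra.
From mathcomp Require Import ring lra zify.
Import Order.TTheory GRing.Theory Num.Theory.
Local Open Scope ring_scope.

Definition Pm (m : nat) (y : rat) : rat := \prod_(1 <= l < m) (y + l%:R).

Lemma Pdiff m y : Pm m y - Pm m (y - 1) = (m.-1)%:R * Pm m.-1 y.
Proof.
case: m => [|m]; first by rewrite /Pm !big_geq // subrr mul0r.
case: m => [|m]; first by rewrite /Pm !big_geq // subrr mul0r.
rewrite /Pm /=.
have -> : \prod_(1 <= l < m.+2) (y + l%:R) = (\prod_(1 <= l < m.+1) (y + l%:R)) * (y + m.+1%:R) by rewrite big_nat_recr.
have -> : \prod_(1 <= l < m.+2) (y - 1 + l%:R) = y * \prod_(1 <= l < m.+1) (y + l%:R).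
  rewrite big_nat_recl // subrK; congr (_ * _).
  by apply: eq_bigr => l _; rewrite -addn1 natrD; ring.
ring.
Qed.

Lemma T0 r : forall m (x : rat), (0 < m <= r)%N ->
  \sum_(i < r.+1) 'C(r, i)%:R * (-1) ^+ i * Pm m (x - i%:R) = 0.
Proof.
elim: r => [|r IH] m x Hm; first by lia.
set f := fun i : nat => Pm m (x - i%:R).
transitivity (\sum_(i < r.+2) 'C(r.+1, i)%:R * (-1) ^+ i * f i); first by [].
have E1 : \sum_(i < r.+2) 'C(r.+1, i)%:R * (-1) ^+ i * f i =
   f 0%N + \sum_(i < r.+1) 'C(r, i)%:R * (-1) ^+ i.+1 * f i.+1
         + \sum_(i < r.+1) 'C(r, i.+1)%:R * (-1) ^+ i.+1 * f i.+1.
  rewrite big_ord_recl /= bin0 expr0 !mul1r -addrA; congr (_ + _).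
  rewrite -big_split /=; apply: eq_bigr => i _.
  have -> : bump 0 i = i.+1 by []. by rewrite binS natrD !mulrDl addrC.
have E2 : \sum_(i < r.+1) 'C(r, i.+1)%:R * (-1) ^+ i.+1 * f i.+1 =
   \sum_(i < r.+1) 'C(r, i)%:R * (-1) ^+ i * f i - f 0%N.
  have H : \sum_(i < r.+2) 'C(r, i)%:R * (-1) ^+ i * f i = \sum_(i < r.+1) 'C(r, i)%:R * (-1) ^+ i * f i.
    by rewrite big_ord_recr /= bin_small // !mul0r addr0.
  rewrite big_ord_recl /= bin0 expr0 !mul1r in H.
  by rewrite -H [f 0%N + _]addrC addrK; apply: eq_bigr.
rewrite E1 E2.
have -> : f 0%N + \sum_(i < r.+1) 'C(r, i)%:R * (-1) ^+ i.+1 * f i.+1 +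
   (\sum_(i < r.+1) 'C(r, i)%:R * (-1) ^+ i * f i - f 0%N) =
   \sum_(i < r.+1) 'C(r, i)%:R * (-1) ^+ i * (f i - f i.+1).
  rewrite [RHS](eq_bigr (fun i : 'I_r.+1 => 'C(r, i)%:R * (-1) ^+ i * f i
      + 'C(r, i)%:R * (-1) ^+ i.+1 * f i.+1)); last first.
    by move=> i _; rewrite exprS; ring.
  rewrite big_split /=; ring.
rewrite (eq_bigr (fun i : 'I_r.+1 => (m.-1)%:R * ('C(r, i)%:R * (-1) ^+ i * Pm m.-1 (x - i%:R)))); last first.
  by move=> i _; rewrite /f -natr1 opprD addrA Pdiff; ring.
rewrite -mulr_sumr.
clear E1 E2 f; case: m Hm => [|[|m]] Hm //=; first by rewrite mul0r.
by rewrite IH ?mulr0 //; lia.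
Qed.
Lemma Pzero m y l : (1 <= l < m)%N -> y + l%:R = 0 -> Pm m y = 0.
Proof.
move=> /andP[H1 H2] Hy; rewrite /Pm (big_cat_nat (n:=l)) //=; last exact: ltnW.
by rewrite [X in _ * X]big_ltn //= Hy mul0r mulr0.
Qed.

Lemma prodN k : \prod_(1 <= i < k.+1) (- (i%:R : rat)) = (-1) ^+ k * k`!%:R.
Proof.
elim: k => [|k IH]; first by rewrite big_geq // expr0 mul1r.
by rewrite big_nat_recr //= IH factS natrM exprS; ring.
Qed.

Lemma Pneg k : Pm k.+1 (- (k.+1)%:R) = (-1) ^+ k * k`!%:R.
Proof.
rewrite /Pm big_nat_rev /= -prodN; apply: eq_big_nat => i /andP[H1 H2].
rewrite add1n subSS natrB; last by lia.
ring.
Qed.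

Lemma core r q t : (1 <= r)%N -> (t < r)%N ->
  \sum_(0 <= i < q.+1) 'C(r, i)%:R * (-1) ^+ i * Pm r (q%:R - t%:R - i%:R)
  = (r.-1)`!%:R * (q == t)%:R.
Proof.
move=> Hr Ht.
have Z : forall i, (1 <= t + i - q < r)%N -> Pm r (q%:R - t%:R - i%:R) = 0.
  move=> i Hi; have Hq : (q <= t + i)%N by lia.
  by apply: Pzero Hi _; rewrite natrB ?natrD //; ring.
case: (ltnP q t) => Hqt.
  rewrite (_ : q == t = false); last by apply/negbTE; lia.
  rewrite mulr0 big_nat_cond big1 // => i /andP[/andP[_ Hi] _].
  by rewrite Z ?mulr0 //; lia.
case: (leqP r q) => Hrq.
  rewrite (_ : q == t = false); last by apply/negbTE; lia.
  rewrite mulr0 (big_cat_nat (n:=r.+1)) //= [X in _ + X](_ : _ = 0) ?addr0; last first.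
    rewrite big_nat_cond big1 // => i /andP[/andP[Hi _] _].
    by rewrite bin_small // !mul0r.
  by rewrite big_mkord T0 //; lia.
have H : \sum_(0 <= i < r.+1) 'C(r, i)%:R * (-1) ^+ i * Pm r (q%:R - t%:R - i%:R) = 0.
  by rewrite big_mkord T0 //; lia.
rewrite (big_cat_nat (n:=q.+1)) //= in H; last by lia.
rewrite (_ : \sum_(q.+1 <= i < r.+1) 'C(r, i)%:R * (-1) ^+ i * Pm r (q%:R - t%:R - i%:R)
   = 'C(r, r)%:R * (-1) ^+ r * Pm r (q%:R - t%:R - r%:R)) in H; last first.
  rewrite big_nat_recr /=; last by lia.
  rewrite [X in X + _](_ : _ = 0) ?add0r //.
  rewrite big_nat_cond big1 // => i /andP[/andP[Hi1 Hi2] _].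
  by rewrite Z ?mulr0 //; lia.
move: H; set S := \sum_(0 <= i < q.+1) _; rewrite binn mul1r.
case: (ltngtP t q) => Htq; [|lia|].
  rewrite Z; last by lia.
  by rewrite mulr0 addr0 mulr0.
subst t; clearbody S; rewrite mulr1 subrr sub0r.
case: r Hr Ht Z Hrq => [|k] // Hr Ht Z Hrq; rewrite Pneg /= exprS => H.
have E : (-1) ^+ k * (-1) ^+ k = (1 : rat) by rewrite -expr2 sqrr_sign.
move/eqP: H; rewrite addr_eq0 => /eqP ->.
rewrite (_ : - (-1 * (-1) ^+ k * ((-1) ^+ k * k`!%:R)) = ((-1) ^+ k * (-1) ^+ k) * k`!%:R); last by ring.
by rewrite E mul1r.
Qed.
Theorem proposition2p1 (r : nat) (a : 'I_r -> nat) (D : nat) (n : nat) :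
  (1 <= r)%N ->
  (forall k, (0 < a k)%N) ->
  (0 < D)%N ->
  (forall k, (a k %| D)%N) ->
  (f_a D a n)%:R =
    ((r.-1)`!%:R)^-1 *
    \sum_(0 <= i < (n %/ D).+1)
      ('C(r, i)%:R * (-1) ^+ i *
       \sum_(j : {ffun 'I_r -> 'I_D} | in_box a j && (wsum a j == n %[mod D]))
         \prod_(1 <= l < r)
           (((n%:Z - (wsum a j)%:Z)%:~R / D%:R : rat) + l%:R - i%:R)).
Proof.
move=> Hr Ha HD HaD.
set q := (n %/ D)%N.
have Hw : forall j : {ffun 'I_r -> 'I_D}, in_box a j -> (wsum a j < r * D)%N.
  move=> j Hb; have Hj : forall k, (j k < D %/ a k)%N by apply/forallP.
  rewrite /wsum.
  apply: (@leq_ltn_trans (\sum_(k < r) D.-1)%N).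
    apply: leq_sum => k _; have Hjk := Hj k; have /dvdnP[c Hc] := HaD k.
    have Hdc : (D %/ a k = c)%N by rewrite Hc mulnK.
    rewrite Hdc in Hjk; have := Ha k; move: (nat_of_ord (j k)) Hjk => x Hx Hak.
    rewrite Hc; nia.
  rewrite sum_nat_const card_ord; nia.
set A := fun j : {ffun 'I_r -> 'I_D} => in_box a j && (wsum a j == n %[mod D]).
rewrite (eq_bigr (fun i => 'C(r,i)%:R * (-1)^+i * \sum_(j | A j)
    Pm r (q%:R - (wsum a j %/ D)%N%:R - i%:R))); last first.
  move=> i _; congr (_ * _); apply: eq_bigr => j /andP[_ /eqP Hm].
  have E : ((n%:Z - (wsum a j)%:Z)%:~R / D%:R : rat) = q%:R - (wsum a j %/ D)%N%:R.
    rewrite [in LHS](divn_eq n D) [in LHS](divn_eq (wsum a j) D) Hm intrB.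
    rewrite -!pmulrn !natrD !natrM; apply: (@mulIf _ D%:R).
      by rewrite pnatr_eq0 -lt0n.
    rewrite mulfVK ?pnatr_eq0 -?lt0n //; ring.
  by rewrite /Pm; apply: eq_bigr => l _; rewrite E; ring.
under eq_bigr do rewrite mulr_sumr.
rewrite exchange_big /=.
rewrite (eq_bigr (fun j => (r.-1)`!%:R * (wsum a j == n)%:R)); last first.
  move=> j /andP[Hb /eqP Hm].
  rewrite (eq_bigr (fun i => 'C(r, i)%:R * (-1) ^+ i * Pm r (q%:R - (wsum a j %/ D)%N%:R - i%:R))); last by move=> i _; ring.
  rewrite core //; last by rewrite ltn_divLR //; apply: Hw.
  congr (_ * (nat_of_bool _)%:R); apply/eqP/eqP => [Hq|->] //.
  by rewrite (divn_eq n D) (divn_eq (wsum a j) D) Hm -/q Hq.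
rewrite -mulr_sumr mulKf; last by rewrite pnatr_eq0 -lt0n fact_gt0.
rewrite /f_a cardsE -sum1_card natr_sum big_mkcond [RHS]big_mkcond /=.
apply: eq_bigr => j _; rewrite unfold_in /A /=.
case: (in_box a j) => /=; last by []. case: (wsum a j =P n) => [->|_]; first by rewrite eqxx. by case: ifP.
Qed.
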